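(* Let $L$ be a non-degenerate real quadratic form on $\mathbb R^s$ and let $v,w\in Con_L$ with $b_L(v,w)\neq0$. Then the oriented distance between the horoballs $Hb_v$ and $Hb_w$ of $\mathcal P_s(L)$ equals $2\sqrt2\,\ln|b_L(v,w)|$, i.e. $$\inf_{Q\in\mathcal P_s(L),\ Q(w)\le1}\sqrt2\,\ln Q(v)=2\sqrt2\,\ln|b_L(v,w)|.$$
   Context: $b_L$ is the symmetric bilinear form with $L(x)=b_L(x,x)$; $Con_L=\{x:L(x)=0\}$. $\mathcal P_s(L)$ is the set of positive definite quadratic forms $Q$ on $\mathbb R^s$ such that in some basis $Q$ has matrix $\mathrm{Id}_s$ and $L$ has matrix $\mathrm{diag}(1,\dots,1,-1,\dots,-1)$. For nonzero $v\in Con_L$, $f_v(Q)=\sqrt2\ln Q(v)$ is a Busemann function on $\mathcal P_s(L)$ and $Hb_v=\{Q\in\mathcal P_s(L):f_v(Q)\le0\}$; the oriented distance from $Hb_v$ to $Hb_w$ is $\inf_{Q\in Hb_w}f_v(Q)$. *)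

(* Defs.v *)
From HB Require Import structures.
From mathcomp Require Import all_boot all_order all_algebra.
From mathcomp Require Import all_classical all_reals.
From mathcomp Require Import ereal exp.
Set Implicit Arguments. Unset Strict Implicit. Unset Printing Implicit Defensive.
Import Order.TTheory GRing.Theory Num.Theory.
Local Open Scope ring_scope.

(* A quadratic form on R^s is represented by its symmetric Gram matrix A:
   qf A x = x^T A x, and bf A x y = x^T A y is the associated symmetric
   bilinear form (b_L(x,x) = L(x)). *)
Definition qf (R : realType) (s : nat) (A : 'M[R]_s) (x : 'cV[R]_s) : R :=
  (x^T *m A *m x) 0 0.
Definition bf (R : realType) (s : nat) (A : 'M[R]_s) (x y : 'cV[R]_s) : R :=
  (x^T *m A *m y) 0 0.

Definition symmetric_form (R : realType) (s : nat) (A : 'M[R]_s) : Prop :=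
  A^T = A.

Definition nondeg_qf (R : realType) (s : nat) (A : 'M[R]_s) : Prop :=
  symmetric_form A /\ \det A != 0.

Definition pos_def (R : realType) (s : nat) (Q : 'M[R]_s) : Prop :=
  symmetric_form Q /\ forall x : 'cV[R]_s, x != 0 -> 0 < qf Q x.

Definition Con (R : realType) (s : nat) (L : 'M[R]_s) : set 'cV[R]_s :=
  [set x | qf L x = 0].

(* P_s(L): positive definite Q such that in some basis (columns of the
   invertible change-of-basis matrix P) Q has matrix Id_s and L has matrix
   diag(1,...,1,-1,...,-1) (p ones followed by s-p minus ones). *)
Definition Ps (R : realType) (s : nat) (L : 'M[R]_s) : set 'M[R]_s :=
  [set Q | pos_def Q /\
     exists (p : nat) (P : 'M[R]_s), P \in unitmx /\
       P^T *m Q *m P = 1%:M /\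
       P^T *m L *m P = \matrix_(i < s, j < s)
                         (if i == j then (if (i < p)%N then 1 else -1) else 0)].

(* Main.v *)
Require Import Defs.
From HB Require Import structures.
From mathcomp Require Import all_boot all_order all_algebra.
From mathcomp Require Import all_classical all_reals.
From mathcomp Require Import ereal exp.
From mathcomp Require Import fingroup perm.
From mathcomp Require Import ring lra.
Import Order.TTheory GRing.Theory Num.Theory.
Local Open Scope ring_scope.
Local Open Scope classical_set_scope.
Lemma bfC {R : realType} n (M : 'M[R]_n) x y : M^T = M -> bf M x y = bf M y x.
Proof.
move=> hM; rewrite /bf -[in RHS](trmxK (y^T *m M *m x)) [in RHS]mxE.
by rewrite !trmx_mul !trmxK hM mulmxA.
Qed.

Lemma bfDl {R : realType} n (M : 'M[R]_n) x x' y :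
  bf M (x + x') y = bf M x y + bf M x' y.
Proof. by rewrite /bf linearD /= !mulmxDl mxE. Qed.

Lemma bfDr {R : realType} n (M : 'M[R]_n) x y y' :
  bf M x (y + y') = bf M x y + bf M x y'.
Proof. by rewrite /bf !mulmxDr mxE. Qed.

Lemma bfZl {R : realType} n (M : 'M[R]_n) a x y :
  bf M (a *: x) y = a * bf M x y.
Proof. by rewrite /bf linearZ /= -!scalemxAl mxE. Qed.

Lemma bfZr {R : realType} n (M : 'M[R]_n) a x y :
  bf M x (a *: y) = a * bf M x y.
Proof. by rewrite /bf -!scalemxAr mxE. Qed.

Lemma bf0l {R : realType} n (M : 'M[R]_n) y : bf M 0 y = 0.
Proof. by rewrite /bf trmx0 !mul0mx mxE. Qed.

Lemma bf0r {R : realType} n (M : 'M[R]_n) y : bf M y 0 = 0.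
Proof. by rewrite /bf !mulmx0 mxE. Qed.

Lemma bf_mul {R : realType} m n (M : 'M[R]_m) (P : 'M[R]_(m, n)) x y :
  bf M (P *m x) (P *m y) = bf (P^T *m M *m P) x y.
Proof. by rewrite /bf trmx_mul !mulmxA. Qed.

Lemma bf_block {R : realType} n1 n2 (a : 'M[R]_n1) (d : 'M[R]_n2) x1 x2 y1 y2 :
  bf (block_mx a 0 0 d) (col_mx x1 x2) (col_mx y1 y2) = bf a x1 y1 + bf d x2 y2.
Proof.
by rewrite /bf tr_col_mx mul_row_block !mulmx0 ?mul0mx addr0 add0r mul_row_col mxE.
Qed.

Lemma qf1E {R : realType} n (u : 'cV[R]_n) : qf 1%:M u = \sum_i u i 0 ^+ 2.
Proof. by rewrite /qf mulmx1 mxE; apply: eq_bigr => i _; rewrite mxE expr2. Qed.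

Lemma qf1_ge0 {R : realType} n (u : 'cV[R]_n) : 0 <= qf 1%:M u.
Proof. by rewrite qf1E sumr_ge0 // => i _; rewrite sqr_ge0. Qed.

Lemma qf1_gt0 {R : realType} n (u : 'cV[R]_n) : u != 0 -> 0 < qf 1%:M u.
Proof.
move=> u0; rewrite lt_def qf1_ge0 andbT qf1E psumr_eq0 => [|i _]; last exact: sqr_ge0.
apply: contra u0 => /allP H; apply/eqP/matrixP => i j; rewrite ord1 mxE.
by have := H i (mem_index_enum i); rewrite /= sqrf_eq0 => /eqP.
Qed.
Definition Dsg (R : realType) n p : 'M[R]_n :=
  \matrix_(i < n, j < n) (if i == j then (if (i < p)%N then 1 else -1) else 0).

Lemma Dsg_block1 {R : realType} n p :
  block_mx (1%:M : 'M[R]_1) 0 0 (Dsg R n p) = Dsg R (1 + n) p.+1.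
Proof.
apply/matrixP=> i j; rewrite [RHS]mxE.
case: (split_ordP i) => i' ->; case: (split_ordP j) => j' ->;
  rewrite ?(block_mxEul, block_mxEur, block_mxEdl, block_mxEdr) !mxE ?eq_shift //=.
all: try by rewrite eq_lrshift.
all: try by rewrite eq_rlshift.
all: try by rewrite !ord1.
Qed.

Lemma Dsg_blockN {R : realType} n :
  block_mx ((-1)%:M : 'M[R]_1) 0 0 (Dsg R n 0) = Dsg R (1 + n) 0.
Proof.
apply/matrixP=> i j; rewrite [RHS]mxE.
case: (split_ordP i) => i' ->; case: (split_ordP j) => j' ->;
  rewrite ?(block_mxEul, block_mxEur, block_mxEdl, block_mxEdr) !mxE ?eq_shift //=.
all: try by rewrite eq_lrshift.
all: try by rewrite eq_rlshift.
all: try by rewrite !ord1.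
Qed.

Lemma Dsg0 {R : realType} n p : (forall i : 'I_n, ~~ (i < p)%N) -> Dsg R n p = Dsg R n 0.
Proof.
move=> H; apply/matrixP=> i j; rewrite !mxE; case: eqP => // _.
by rewrite (negbTE (H i)).
Qed.

Lemma Dsg_tr {R : realType} n p : (Dsg R n p)^T = Dsg R n p.
Proof.
apply/matrixP=> i j; rewrite !mxE; case: (eqVneq i j) => [->|nij]; first by [].
by [].
Qed.

Lemma Dsg_sq {R : realType} n p : Dsg R n p *m Dsg R n p = 1%:M.
Proof.
apply/matrixP=> i j; rewrite !mxE (bigD1 i) //= big1 => [|k /negbTE nki].
  rewrite !mxE eqxx addr0; case: (i == j); last by rewrite mulr0.
  by case: ifP; rewrite ?mulr1 ?mulrNN ?mulr1.
by rewrite !mxE eq_sym nki mul0r.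
Qed.

Lemma qf_delta {R : realType} n (M : 'M[R]_n) (i : 'I_n) :
  qf M (delta_mx i 0) = M i i.
Proof. by rewrite /qf trmx_delta -rowE -colE !mxE. Qed.

Lemma qf_Dsg_delta {R : realType} n p (i : 'I_n) :
  qf (Dsg R n p) (delta_mx i 0) = if (i < p)%N then 1 else -1.
Proof. by rewrite qf_delta mxE eqxx. Qed.
Lemma basis_compl {R : realType} {n} {z : 'cV[R]_(1 + n)} : z != 0 ->
  exists P0 : 'M[R]_(1 + n), P0 \in unitmx /\ P0 *m col_mx 1%:M 0 = z.
Proof.
move=> z0.
have [k zk] : exists k, z k 0 != 0.
  apply/existsP; apply: contraNT z0 => /existsPn H; apply/eqP/matrixP => i j.
  by rewrite ord1 mxE; apply/eqP; have := H i; rewrite negbK.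
pose s : 'S_(1 + n) := tperm ord0 k.
pose z' : 'cV[R]_(1 + n) := perm_mx s *m z.
have z'0 : z' ord0 0 = z k 0 by rewrite /z' -row_permE mxE tpermL.
pose S := block_mx (usubmx z') (0 : 'M_(1, n)) (dsubmx z') 1%:M.
exists (perm_mx s^-1 *m S); split.
  rewrite unitmx_mul unitmx_perm /= unitmxE det_lblock det1 mulr1 det_mx11 unitfE.
  rewrite mxE; have -> : lshift n (0 : 'I_1) = ord0 by apply: val_inj.
  by rewrite z'0.
rewrite -mulmxA mul_block_col !mulmx1 !mulmx0 !addr0 vsubmxK /z' mulmxA.
by rewrite -perm_mxM mulVg perm_mx1 mul1mx.
Qed.

Lemma qf0 {R : realType} n (M : 'M[R]_n) : qf M 0 = 0.
Proof. exact: bf0l. Qed.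

Lemma qf_e0 {R : realType} n (A : 'M[R]_(1 + n)) :
  qf A (col_mx 1%:M 0) = ulsubmx A 0 0.
Proof.
rewrite /qf -[A in LHS]submxK tr_col_mx trmx1 trmx0 mul_row_block.
by rewrite !mul1mx !mul0mx !addr0 mul_row_col mulmx1 mulmx0 addr0.
Qed.

Lemma step {R : realType} {n} {M : 'M[R]_(1 + n)} {z : 'cV[R]_(1 + n)} {c : R} :
  M^T = M -> \det M != 0 -> c != 0 -> qf M z = c ->
  exists (P1 : 'M[R]_(1 + n)) (M' : 'M[R]_n),
    [/\ P1 \in unitmx, P1^T *m M *m P1 = block_mx c%:M 0 0 M',
        P1 *m col_mx 1%:M 0 = z, M'^T = M' & \det M' != 0].
Proof.
move=> hM dM c0 hz.
have z0 : z != 0 by apply: contraNneq c0 => ez; rewrite -hz ez qf0.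
have [P0 [uP0 P0z]] := basis_compl z0.
pose M1 := P0^T *m M *m P0.
have sM1 : M1^T = M1 by rewrite /M1 !trmx_mul trmxK hM mulmxA.
have ha : ulsubmx M1 = c%:M.
  rewrite [LHS]mx11_scalar -qf_e0 -hz -P0z.
  by rewrite /M1 /qf trmx_mul !mulmxA.
have hb : dlsubmx M1 = (ursubmx M1)^T.
  by rewrite -[in LHS]sM1 -[M1 in LHS]submxK tr_block_mx block_mxKdl.
have hd : (drsubmx M1)^T = drsubmx M1.
  by rewrite -[in RHS]sM1 -[M1 in RHS]submxK tr_block_mx block_mxKdr.
set b := ursubmx M1 in hb *; set d := drsubmx M1 in hd *.
pose k := c^-1.
pose E : 'M[R]_(1 + n) := block_mx 1%:M (- k *: b) 0 1%:M.
pose M' := d - k *: (b^T *m b).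
have hE : E^T *m M1 *m E = block_mx c%:M 0 0 M'.
  rewrite -[M1 in LHS]submxK ha hb /E tr_block_mx !trmx1 trmx0.
  rewrite !mulmx_block.
  have h1 : (- k *: b)^T *m c%:M + b^T = 0.
    by rewrite mul_mx_scalar linearZ /= scalerA mulrN mulfV // scaleN1r addNr.
  have h2 : c%:M *m (- k *: b) + b = 0.
    by rewrite mul_scalar_mx scalerA mulrN mulfV // scaleN1r addNr.
  rewrite -/b -/d !mul1mx !mul0mx !mulmx1 !mulmx0 !addr0 h1 h2 mul0mx add0r.
  by rewrite /M' linearZ /= -scalemxAl addrC scaleNr.
have uE : E \in unitmx by rewrite unitmxE det_ublock !det1 mulr1 unitr1.
exists (P0 *m E), M'; split.
- by rewrite unitmx_mul uP0 uE.
- by rewrite trmx_mul -hE /M1 !mulmxA.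
- by rewrite -mulmxA /E mul_block_col !mul1mx !mulmx0 !mul0mx !addr0 P0z.
- by rewrite /M' linearB linearZ /= trmx_mul trmxK hd.
- have dE : \det E != 0 by move: uE; rewrite unitmxE unitfE.
  have dP : \det P0 != 0 by move: uP0; rewrite unitmxE unitfE.
  have : \det (E^T *m M1 *m E) != 0.
    by rewrite /M1 !det_mulmx !det_tr !mulf_neq0.
  by rewrite hE det_ublock det_scalar1 mulf_eq0 negb_or => /andP[].
Qed.
Lemma qfZ {R : realType} n (M : 'M[R]_n) a t : qf M (a *: t) = a ^+ 2 * qf M t.
Proof. by rewrite /qf -/(bf M _ _) bfZl bfZr mulrA expr2. Qed.

Lemma qfD {R : realType} n (M : 'M[R]_n) a b : M^T = M ->
  qf M (a + b) = qf M a + 2 * bf M a b + qf M b.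
Proof.
move=> hM; rewrite /qf -!/(bf M _ _) !bfDl !bfDr (bfC _ _ b a hM).
by rewrite mulr2n mulrDl !mul1r !addrA.
Qed.

Lemma bf_delta {R : realType} n (M : 'M[R]_n) (i j : 'I_n) :
  bf M (delta_mx i 0) (delta_mx j 0) = M i j.
Proof. by rewrite /bf trmx_delta -rowE -colE !mxE. Qed.

Lemma bf1_col {R : realType} n1 n2 (x1 y1 : 'cV[R]_n1) (x2 y2 : 'cV[R]_n2) :
  bf 1%:M (col_mx x1 x2) (col_mx y1 y2) = bf 1%:M x1 y1 + bf 1%:M x2 y2.
Proof. by rewrite (scalar_mx_block n1 n2) bf_block. Qed.

Lemma qf1_col {R : realType} n1 n2 (x1 : 'cV[R]_n1) (x2 : 'cV[R]_n2) :
  qf 1%:M (col_mx x1 x2) = qf 1%:M x1 + qf 1%:M x2.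
Proof. exact: bf1_col. Qed.

Lemma qf1_11 {R : realType} : qf (1%:M : 'M[R]_1) 1%:M = 1.
Proof. by rewrite /qf trmx1 !mulmx1 mxE. Qed.

Lemma normalize {R : realType} n (M : 'M[R]_n) t (q : R) : 0 < q -> qf M t = q \/ qf M t = - q ->
  qf M ((Num.sqrt q)^-1 *: t) = 1 \/ qf M ((Num.sqrt q)^-1 *: t) = -1.
Proof.
move=> q0 ht; rewrite qfZ exprVn sqr_sqrtr ?ltW //.
by case: ht => ->; [left|right]; rewrite ?mulrN mulVf ?gt_eqF.
Qed.

Lemma normP {R : realType} n (M : 'M[R]_n) t : 0 < qf M t ->
  qf M ((Num.sqrt (qf M t))^-1 *: t) = 1.
Proof.
move=> q0; rewrite qfZ exprVn sqr_sqrtr ?ltW // mulVf // gt_eqF //.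
Qed.

Lemma normN {R : realType} n (M : 'M[R]_n) t : qf M t < 0 ->
  qf M ((Num.sqrt (- qf M t))^-1 *: t) = -1.
Proof.
move=> q0; have q0' : 0 < - qf M t by rewrite oppr_gt0.
rewrite qfZ exprVn sqr_sqrtr ?ltW // -{2}(opprK (qf M t)) mulrN mulVf // gt_eqF //.
Qed.
Lemma key {R : realType} n : forall (M : 'M[R]_n), M^T = M -> \det M != 0 ->
  forall x y : 'cV[R]_n, (x = 0 \/ qf M x = 1) -> (y = 0 \/ qf M y = -1) ->
  bf M x y = 0 ->
  exists p (P : 'M[R]_n) (X Y : 'cV[R]_n),
    [/\ P \in unitmx, P^T *m M *m P = Dsg R n p, P *m X = x, P *m Y = y &
      [/\ qf 1%:M X <= 1, qf 1%:M Y <= 1 & bf 1%:M X Y = 0]].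
Proof.
elim: n => [|n IH] M hM dM x y hx hy hxy.
  exists 0%N, 1%:M, 0, 0; split; rewrite ?unitmx1 ?flatmx0 //.
  by split; rewrite ?qf0 ?bf0l ?ler01.
move: M hM dM x y hx hy hxy; change n.+1 with (1 + n)%N => M hM dM x y hx hy hxy.
have hB : forall P' : 'M[R]_n, P' \in unitmx -> block_mx (1%:M : 'M[R]_1) 0 0 P' \in unitmx.
  by move=> P' uP'; rewrite unitmxE det_ublock det1 mul1r -unitmxE.
have hT : forall (P1 B : 'M[R]_(1 + n)), (P1 *m B)^T *m M *m (P1 *m B) = B^T *m (P1^T *m M *m P1) *m B.
  by move=> P1 B; rewrite trmx_mul !mulmxA.
have hBc : forall (P' : 'M[R]_n) (a : 'cV[R]_1) (b : 'cV[R]_n),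
    block_mx (1%:M : 'M[R]_1) 0 0 P' *m col_mx a b = col_mx a (P' *m b).
  by move=> P' a b; rewrite mul_block_col !mul1mx !mul0mx addr0 add0r.
have hBD : forall (P' M' : 'M[R]_n) (c : R), (block_mx (1%:M : 'M[R]_1) 0 0 P')^T *m block_mx (c%:M : 'M[R]_1) 0 0 M' *m block_mx (1%:M : 'M[R]_1) 0 0 P'
   = block_mx (c%:M : 'M[R]_1) 0 0 (P'^T *m M' *m P').
  move=> P' M' c; rewrite tr_block_mx !trmx1 !trmx0 !mulmx_block.
  by rewrite !mul1mx !mul0mx !mulmx0 !mulmx1 !addr0 !add0r ?trmx0 ?mul0mx.
have caseI : forall z, qf M z = 1 -> bf M z y = 0 -> (x = 0 \/ x = z) ->
  exists p (P : 'M[R]_(1 + n)) (X Y : 'cV[R]_(1 + n)),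
    [/\ P \in unitmx, P^T *m M *m P = Dsg R (1 + n) p, P *m X = x, P *m Y = y &
      [/\ qf 1%:M X <= 1, qf 1%:M Y <= 1 & bf 1%:M X Y = 0]].
  move=> z hz hzy hxz.
  have [P1 [M' [uP1 hP1 P1z sM' dM']]] := step hM dM (oner_neq0 _) hz.
  pose u := invmx P1 *m y.
  have yu : P1 *m u = y by rewrite mulKVmx.
  have eu : u = col_mx (usubmx u) (dsubmx u) by rewrite vsubmxK.
  have hbu : bf M z y = bf (1%:M : 'M[R]_1) 1%:M (usubmx u) + bf M' 0 (dsubmx u).
    by rewrite -P1z -yu bf_mul hP1 {1}eu bf_block ?col_mxKu ?col_mxKd.
  have hu1 : usubmx u = 0.
    move: hbu; rewrite hzy bf0l addr0 /bf trmx1 !mul1mx => h.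
    by apply/matrixP => i j; rewrite !ord1 -h mxE.
  have hqu : qf M y = qf M' (dsubmx u).
    by rewrite /qf -!/(bf _ _ _) -yu bf_mul hP1 eu bf_block ?col_mxKu ?col_mxKd hu1 bf0l add0r.
  have hy' : dsubmx u = 0 \/ qf M' (dsubmx u) = -1.
    case: hy => [y0|hy1]; last by right; rewrite -hqu.
    by left; rewrite /u y0 mulmx0; apply/matrixP => i j; rewrite !mxE.
  have [p' [P' [X' [Y' [uP' hP' PX' PY' [nX' nY' dXY']]]]]] :=
    IH M' sM' dM' 0 (dsubmx u) (or_introl erefl) hy' (bf0l _ _ _).
  have hD : (P1 *m block_mx 1%:M 0 0 P')^T *m M *m (P1 *m block_mx 1%:M 0 0 P') = Dsg R (1 + n) p'.+1.
    by rewrite hT hP1 hBD hP' Dsg_block1.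
  have hPY : P1 *m block_mx 1%:M 0 0 P' *m col_mx (0 : 'cV[R]_1) Y' = y.
    by rewrite -mulmxA hBc PY' -hu1 -eu yu.
  have nY : qf 1%:M (col_mx (0 : 'cV[R]_1) Y') <= 1 by rewrite qf1_col qf0 add0r.
  case: hxz => [x0|xz].
    exists p'.+1, (P1 *m block_mx 1%:M 0 0 P'), 0, (col_mx (0 : 'cV[R]_1) Y'); split => //.
    - by rewrite unitmx_mul uP1 hB.
    - by rewrite mulmx0 x0.
    - by split; rewrite ?qf0 ?ler01 ?bf0l.
  exists p'.+1, (P1 *m block_mx 1%:M 0 0 P'), (col_mx (1%:M : 'cV[R]_1) 0), (col_mx (0 : 'cV[R]_1) Y'); split => //.
  - by rewrite unitmx_mul uP1 hB.
  - by rewrite -mulmxA hBc mulmx0 P1z xz.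
  - by split; rewrite ?qf1_col ?bf1_col ?qf1_11 ?qf0 ?addr0 ?bf0l ?bf0r ?add0r.
have caseII : (forall t, qf M t <= 0) -> x = 0 -> forall z, qf M z = -1 -> (y = 0 \/ y = z) ->
  exists p (P : 'M[R]_(1 + n)) (X Y : 'cV[R]_(1 + n)),
    [/\ P \in unitmx, P^T *m M *m P = Dsg R (1 + n) p, P *m X = x, P *m Y = y &
      [/\ qf 1%:M X <= 1, qf 1%:M Y <= 1 & bf 1%:M X Y = 0]].
  move=> nopos x0 z hz hyz.
  have m1 : (-1 : R) != 0 by rewrite oppr_eq0 oner_eq0.
  have [P1 [M' [uP1 hP1 P1z sM' dM']]] := step hM dM m1 hz.
  have [p' [P' [X' [Y' [uP' hP' _ _ _]]]]] :=
    IH M' sM' dM' 0 0 (or_introl erefl) (or_introl erefl) (bf0l _ _ _).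
  have hp : forall i : 'I_n, ~~ (i < p')%N.
    move=> i; have := nopos (P1 *m col_mx 0 (P' *m delta_mx i 0)).
    rewrite /qf -!/(bf _ _ _) bf_mul hP1 bf_block bf0l add0r bf_mul hP'.
    by rewrite bf_delta mxE eqxx; case: ifP => // _; rewrite ler10.
  have hD : (P1 *m block_mx 1%:M 0 0 P')^T *m M *m (P1 *m block_mx 1%:M 0 0 P') = Dsg R (1 + n) 0.
    by rewrite hT hP1 hBD hP' (Dsg0 _ _ hp) Dsg_blockN.
  case: hyz => [y0|yz].
    exists 0%N, (P1 *m block_mx 1%:M 0 0 P'), 0, 0; split => //.
    - by rewrite unitmx_mul uP1 hB.
    - by rewrite mulmx0 x0.
    - by rewrite mulmx0 y0.
    - by split; rewrite ?qf0 ?ler01 ?bf0l.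
  exists 0%N, (P1 *m block_mx 1%:M 0 0 P'), 0, (col_mx (1%:M : 'cV[R]_1) 0); split => //.
  - by rewrite unitmx_mul uP1 hB.
  - by rewrite mulmx0 x0.
  - by rewrite -mulmxA hBc mulmx0 P1z yz.
  - by split; rewrite ?qf1_col ?qf1_11 ?qf0 ?addr0 ?bf0l ?ler01.
case: hx => [x0|hx1]; last exact: caseI x hx1 hxy (or_intror erefl).
have [[t Ht]|nopos] := pselect (exists t, 0 < qf M t).
  case: hy => [y0|hy1].
    by apply: (caseI _ (normP _ _ _ Ht)); [rewrite y0 bf0r | left].
  pose b := bf M t y; pose t' := t + b *: y.
  have ht' : qf M t' = qf M t + b ^+ 2.
    rewrite /t' qfD // bfZr qfZ -/b.
    have -> : b ^+ 2 * qf M y = b ^+ 2 * (-1) by congr (_ * _); exact: hy1.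
    ring.
  have Ht' : 0 < qf M t' by rewrite ht'; have := sqr_ge0 b; lra.
  apply: (caseI _ (normP _ _ _ Ht')); last by left.
  rewrite bfZl /t' bfDl bfZl -/b.
  have -> : bf M y y = -1 by exact: hy1.
  by rewrite mulrN1 addrN mulr0.
have np : forall t, qf M t <= 0.
  by move=> t; rewrite leNgt; apply/negP => h; apply: nopos; exists t.
case: hy => [y0|hy1]; last exact: caseII np x0 y hy1 (or_intror erefl).
have [[t Ht]|none] := pselect (exists t, qf M t < 0).
  exact: caseII np x0 _ (normN _ _ _ Ht) (or_introl y0).
have z0 : forall t, qf M t = 0.
  move=> t; apply/eqP; rewrite eq_le np leNgt; apply/negP => h; apply: none.
  by exists t.
have M0 : M = 0.
  apply/matrixP => i j; rewrite [RHS]mxE -bf_delta.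
  have := qfD _ M (delta_mx i 0) (delta_mx j 0) hM; rewrite !z0 => h; lra.
by move: dM; rewrite M0 det0 eqxx.
Qed.
Lemma cs1 {R : realType} n (U Y : 'cV[R]_n) :
  bf 1%:M U Y ^+ 2 <= qf 1%:M U * qf 1%:M Y.
Proof.
have [U0|U0] := eqVneq U 0.
  by rewrite U0 bf0l expr0n /= mulr_ge0 ?qf1_ge0.
have A0 := qf1_gt0 _ _ U0.
have h := qf1_ge0 _ (qf 1%:M U *: Y + (- bf 1%:M U Y) *: U).
rewrite qfD ?trmx1 // !qfZ bfZl bfZr (bfC _ _ Y U) ?trmx1 // in h.
nra.
Qed.

Lemma csD {R : realType} n p (X Y : 'cV[R]_n) :
  bf (Dsg R n p) X Y ^+ 2 <= qf 1%:M X * qf 1%:M Y.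
Proof.
have -> : bf (Dsg R n p) X Y = bf 1%:M (Dsg R n p *m X) Y.
  by rewrite /bf trmx_mul Dsg_tr mulmx1.
have -> : qf 1%:M X = qf 1%:M (Dsg R n p *m X).
  by rewrite /qf trmx_mul Dsg_tr !mulmx1 -mulmxA (mulmxA (Dsg R n p)) Dsg_sq mul1mx.
exact: cs1.
Qed.

Lemma qfAA {R : realType} n (A : 'M[R]_n) x : qf (A^T *m A) x = qf 1%:M (A *m x).
Proof. by rewrite /qf trmx_mul mulmx1 !mulmxA. Qed.

Lemma lower_bound {R : realType} s (L Q : 'M[R]_s) (v w : 'cV[R]_s) :
  Ps L Q -> qf Q w <= 1 -> bf L v w ^+ 2 <= qf Q v.
Proof.
move=> [[sQ pQ] [p [P [uP [hQ hL]]]]] hw.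
pose X := invmx P *m v; pose Y := invmx P *m w.
have vX : v = P *m X by rewrite mulKVmx.
have wY : w = P *m Y by rewrite mulKVmx.
have eQv : qf Q v = qf 1%:M X by rewrite /qf -!/(bf _ _ _) vX bf_mul hQ.
have eQw : qf Q w = qf 1%:M Y by rewrite /qf -!/(bf _ _ _) wY bf_mul hQ.
have eL : bf L v w = bf (Dsg R s p) X Y by rewrite vX wY bf_mul hL.
rewrite eL eQv; apply: le_trans (csD _ p X Y) _.
rewrite -eQw; have := qf1_ge0 _ X; rewrite -eQv => h.
by rewrite -[leRHS]mulr1 ler_wpM2l.
Qed.
Theorem lemma3p14 (R : realType) (s : nat) (L : 'M[R]_s)
  (v w : 'cV[R]_s) :
  nondeg_qf L -> v \in Con L -> w \in Con L -> bf L v w != 0 ->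
  ereal_inf [set ((Num.sqrt 2 * ln (qf Q v))%:E)%E
              | Q in [set Q | Ps L Q /\ qf Q w <= 1]]
  = ((2 * Num.sqrt 2 * ln `|bf L v w|)%:E)%E.
Proof.
move=> [sL dL] hv hw hB.
have Lv : qf L v = 0 by move: hv; rewrite in_setE.
have Lw : qf L w = 0 by move: hw; rewrite in_setE.
have Lv' : bf L v v = 0 := Lv.
have Lw' : bf L w w = 0 := Lw.
set B := bf L v w in hB *.
have bwv : bf L w v = B by rewrite bfC.
pose a := `|B|.
have a0 : 0 < a by rewrite normr_gt0.
have aB : a ^+ 2 = B ^+ 2 by rewrite real_normK ?num_real.
have B2 : 0 < B ^+ 2 by rewrite -aB exprn_gt0.
have s2 : Num.sqrt (2:R) ^+ 2 = 2 by rewrite sqr_sqrtr // ler0n.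
have s20 : 0 < Num.sqrt (2:R) by rewrite sqrtr_gt0 ltr0n.
have s2n : Num.sqrt (2:R) != 0 by rewrite gt_eqF.
have an : a != 0 by rewrite gt_eqF.
pose k := (Num.sqrt 2 * a)^-1.
pose ep := k *: (v + B *: w).
pose em := k *: (v + (- B) *: w).
have hp : qf L ep = 1.
  rewrite /ep qfZ qfD // bfZr qfZ Lv Lw -/B /k exprVn exprMn s2 aB.
  by field.
have hm : qf L em = -1.
  rewrite /em qfZ qfD // bfZr qfZ Lv Lw -/B /k exprVn exprMn s2 aB.
  by field.
have hpm : bf L ep em = 0.
  rewrite /ep /em bfZl bfZr !bfDl !bfDr !bfZl !bfZr bwv Lv' Lw' -/B.
  ring.
have [p [P [X [Y [uP hPL PX PY [nX nY dXY]]]]]] :=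
  key _ L sL dL ep em (or_intror hp) (or_intror hm) hpm.
pose Q := (invmx P)^T *m invmx P.
have iX : invmx P *m ep = X by rewrite -PX mulKmx.
have iY : invmx P *m em = Y by rewrite -PY mulKmx.
pose c1 := Num.sqrt 2 * a / 2.
pose c2 := Num.sqrt 2 * a / (2 * B).
have ev : v = c1 *: (ep + em).
  rewrite /ep /em -scalerDr addrACA -scalerDl addrN scale0r addr0.
  rewrite -mulr2n -scaler_nat !scalerA.
  have -> : c1 * (k * 2) = 1 by rewrite /c1 /k; field; rewrite an s2n.
  by rewrite scale1r.
have ew : w = c2 *: (ep - em).
  rewrite /ep /em -scalerBr opprD addrACA addrN add0r scaleNr opprK.
  rewrite -mulr2n -scaler_nat !scalerA.
  have -> : c2 * (k * 2) * B = 1 by rewrite /c2 /k; field; rewrite an s2n hB.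
  by rewrite scale1r.
have QV : qf Q v = c1 ^+ 2 * (qf 1%:M X + 2 * bf 1%:M X Y + qf 1%:M Y).
  by rewrite /Q qfAA ev -scalemxAr mulmxDr iX iY qfZ qfD ?trmx1.
have QW : qf Q w = c2 ^+ 2 * (qf 1%:M X + 2 * (- bf 1%:M X Y) + qf 1%:M Y).
  rewrite /Q qfAA ew -scalemxAr mulmxBr iX iY qfZ -[- Y]scaleN1r qfD ?trmx1 //.
  by rewrite bfZr qfZ mulN1r sqrrN expr1n mul1r.
have c1E : c1 ^+ 2 = B ^+ 2 / 2.
  by rewrite /c1 !exprMn exprVn s2 aB; field.
have c2E : c2 ^+ 2 = 1 / 2.
  by rewrite /c2 !exprMn exprVn exprMn s2 aB; field; exact: hB.
have hQ : Ps L Q.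
  split.
    split; first by change (Q^T = Q); rewrite /Q trmx_mul trmxK.
    move=> x x0; rewrite /Q qfAA; apply: qf1_gt0.
    by apply: contraNneq x0 => h; rewrite -(mulKVmx uP x) h mulmx0.
  exists p, P; split => //; split => //.
  by rewrite /Q mulmxA -trmx_mul mulVmx // trmx1 mul1mx mulVmx.
have Qw1 : qf Q w <= 1.
  by rewrite QW c2E dXY oppr0 mulr0 addr0; lra.
have QvB : qf Q v = B ^+ 2.
  apply/le_anti/andP; split; last exact: (@lower_bound R s L Q v w hQ Qw1).
  by rewrite QV c1E dXY mulr0 addr0; nra.
have lnE : 2 * Num.sqrt 2 * ln `|B| = Num.sqrt 2 * ln (B ^+ 2).
  by rewrite -aB lnXn //; ring.
apply/eqP; rewrite eq_le; apply/andP; split.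
  apply: ereal_inf_lbound; exists Q; first by split.
  by rewrite QvB lnE.
apply: le_ereal_inf_tmp => _ [Q' [hQ' hQ'w] <-].
have lb := @lower_bound R s L Q' v w hQ' hQ'w.
rewrite lee_fin lnE ler_wpM2l ?(ltW s20) //.
have q0 : 0 < qf Q' v := lt_le_trans B2 lb.
by rewrite ler_ln ?posrE.
Qed.
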